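(* Let $S_1$ and $S_2$ be two finite collections of nonvertical line segments in the plane with $|S_1\cup S_2|=n$, such that within each $S_i$ no two segments intersect. Then the number of intersection points between a segment of $S_1$ and a segment of $S_2$ that lie on an envelope (lower or upper) of $S_1$ and also on an envelope (lower or upper) of $S_2$ is $O(n)$.
   Context: For a finite collection $S$ of nonvertical segments (viewed as graphs of partial functions $\mathbb R\to\mathbb R$), the lower envelope is the pointwise minimum of these graphs (the parts visible from $y=-\infty$), and the upper envelope is the pointwise maximum (the parts visible from $y=+\infty$). *)

(* Defs.v *)
From HB Require Import structures.
From mathcomp Require Import all_boot all_order all_algebra.
From mathcomp Require Import reals.
Set Implicit Arguments. Unset Strict Implicit. Unset Printing Implicit Defensive.
Import Order.TTheory GRing.Theory Num.Theory.
Local Open Scope ring_scope.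

Definition point (R : realType) := (R * R)%type.
Definition seg (R : realType) := (point R * point R)%type.

Definition on_seg (R : realType) (s : seg R) (p : point R) : Prop :=
  exists t : R, 0 <= t /\ t <= 1 /\
    p = (s.1.1 + t * (s.2.1 - s.1.1), s.1.2 + t * (s.2.2 - s.1.2)).

Definition nonvertical (R : realType) (s : seg R) : Prop := s.1.1 != s.2.1.

Definition on_lower_env (R : realType) (S : seq (seg R)) (p : point R) : Prop :=
  (exists2 s, s \in S & on_seg s p) /\
  (forall s q, s \in S -> on_seg s q -> q.1 = p.1 -> p.2 <= q.2).

Definition on_upper_env (R : realType) (S : seq (seg R)) (p : point R) : Prop :=
  (exists2 s, s \in S & on_seg s p) /\
  (forall s q, s \in S -> on_seg s q -> q.1 = p.1 -> q.2 <= p.2).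

Definition on_env (R : realType) (S : seq (seg R)) (p : point R) : Prop :=
  on_lower_env S p \/ on_upper_env S p.

Definition pairwise_disjoint (R : realType) (S : seq (seg R)) : Prop :=
  forall s s' p, s \in S -> s' \in S -> s != s' -> on_seg s p -> on_seg s' p -> False.

Definition red_blue_point (R : realType) (S1 S2 : seq (seg R)) (p : point R) : Prop :=
  exists s1 s2, [/\ s1 \in S1, s2 \in S2, on_seg s1 p & on_seg s2 p].

(* segments of S1 and S2 meet in at most one point (no collinear overlaps) *)
Definition no_overlap (R : realType) (S1 S2 : seq (seg R)) : Prop :=
  forall s1 s2 p q, s1 \in S1 -> s2 \in S2 ->
    on_seg s1 p -> on_seg s2 p -> on_seg s1 q -> on_seg s2 q -> p = q.

(* Main.v *)
Require Import Defs.
From HB Require Import structures.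
From mathcomp Require Import all_boot all_order all_algebra.
From mathcomp Require Import reals.
From mathcomp Require Import ring lra zify.
From Stdlib Require Import ClassicalEpsilon.
Import Order.TTheory GRing.Theory Num.Theory.
Local Open Scope ring_scope.

Module CombM.
Set Implicit Arguments. Unset Strict Implicit. Unset Printing Implicit Defensive.
Local Open Scope nat_scope.

Section Comb.
Variables (S : eqType) (n : nat) (r b : nat -> S) (Z : seq S).
Hypothesis Hp : forall i, i.+1 < n -> (r i != r i.+1) || (b i != b i.+1).
Hypothesis Hr : forall k i i' j, k < i -> i < i' -> i' < j -> j < n ->
  r k = r i' -> r i = r j -> r i = r k.
Hypothesis Hb : forall k i i' j, k < i -> i < i' -> i' < j -> j < n ->
  b k = b i' -> b i = b j -> b i = b k.
Hypothesis HrZ : forall i, i < n -> r i \in Z.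
Hypothesis HbZ : forall i, i < n -> b i \in Z.

Definition lastf (f : nat -> S) i := ~~ has (fun j => f j == f i) (iota i.+1 (n - i.+1)).
Definition firstf (f : nat -> S) i := ~~ has (fun j => f j == f i) (iota 0 i).

Lemma lastfP f i j : lastf f i -> i < j -> j < n -> f j != f i.
Proof.
move/hasPn => H lij ljn; apply: H; rewrite mem_iota; lia.
Qed.

Lemma firstfP f i j : firstf f i -> j < i -> f j != f i.
Proof.
move/hasPn => H lij; apply: H; rewrite mem_iota; lia.
Qed.

Lemma lastfN f i : ~~ lastf f i -> exists j, [/\ i < j, j < n & f j = f i].
Proof.
rewrite negbK => /hasP[j]; rewrite mem_iota => /andP[h1 h2] /eqP e.
exists j; split => //; lia.
Qed.

Lemma firstfN f i : ~~ firstf f i -> exists j, j < i /\ f j = f i.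
Proof.
rewrite negbK => /hasP[j]; rewrite mem_iota => /andP[h1 h2] /eqP e.
exists j; split => //; lia.
Qed.

Definition chg i : nat * S :=
  if lastf r i then (0, r i) else if firstf r i.+1 then (1, r i.+1)
  else if lastf b i then (2, b i) else (3, b i.+1).

Lemma chg_spec i : i.+1 < n ->
  [\/ chg i = (0, r i) /\ lastf r i, chg i = (1, r i.+1) /\ firstf r i.+1,
      chg i = (2, b i) /\ lastf b i | chg i = (3, b i.+1) /\ firstf b i.+1].
Proof.
move=> lin; rewrite /chg.
case: ifP => h1; first by constructor 1.
case: ifP => h2; first by constructor 2.
case: ifP => h3; first by constructor 3.
constructor 4; split => //.
have [j [lij ljn ej]] := lastfN (negbT h1).
have [k [lki ek]] := firstfN (negbT h2).
have eqr : r i = r i.+1.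
  case: (eqVneq (r i) (r i.+1)) => // neq.
  have jn : j != i.+1 by apply/eqP => ej'; rewrite ej' in ej; move: neq; rewrite ej eqxx.
  have kn : k != i by apply/eqP => ek'; rewrite ek' in ek; move: neq; rewrite ek eqxx.
  have := Hr (k:=k) (i:=i) (i':=i.+1) (j:=j); rewrite ek -ej => H.
  have := H ltac:(lia) ltac:(lia) ltac:(lia) ljn erefl erefl.
  by move=> e; move: neq; rewrite -ej e eqxx.
have neqb : b i != b i.+1 by have := Hp lin; rewrite eqr eqxx.
have [j2 [lij2 ljn2 ej2]] := lastfN (negbT h3).
case E: (firstf b i.+1) => //; have [k2 [lk2 ek2]] := firstfN (negbT E).
  have jn : j2 != i.+1 by apply/eqP => ej'; rewrite ej' in ej2; move: neqb; rewrite ej2 eqxx.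
  have kn : k2 != i by apply/eqP => ek'; rewrite ek' in ek2; move: neqb; rewrite ek2 eqxx.
have := Hb (k:=k2) (i:=i) (i':=i.+1) (j:=j2); rewrite ek2 -ej2 => H.
have := H ltac:(lia) ltac:(lia) ltac:(lia) ljn2 erefl erefl.
by move=> e; move: neqb; rewrite -ej2 e eqxx.
Qed.

Lemma chg_inj_lt i j : i < j -> j.+1 < n -> chg i != chg j.
Proof.
move=> lij ljn; have lin : i.+1 < n by lia.
case: (chg_spec lin) => [[-> h]|[-> h]|[-> h]|[-> h]];
case: (chg_spec ljn) => [[-> h']|[-> h']|[-> h']|[-> h']] => //;
 apply/negP => /eqP [e].
- by move: (lastfP h lij ltac:(lia)); rewrite e eqxx.
- by move: (firstfP h' (j:=i.+1) ltac:(lia)); rewrite e eqxx.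
- by move: (lastfP h lij ltac:(lia)); rewrite e eqxx.
- by move: (firstfP h' (j:=i.+1) ltac:(lia)); rewrite e eqxx.
Qed.

Lemma comb_bound : n.-1 <= 4 * size (undup Z).
Proof.
have -> : n.-1 = size [seq chg i | i <- iota 0 n.-1] by rewrite size_map size_iota.
have -> : 4 * size (undup Z) = size [seq (k, s) | k <- iota 0 4, s <- undup Z].
  by rewrite size_allpairs size_iota.
apply: uniq_leq_size.
  rewrite map_inj_in_uniq ?iota_uniq // => i j; rewrite !mem_iota => /andP[_ hi] /andP[_ hj] e.
  case: (ltngtP i j) => // h.
    by move: (chg_inj_lt h ltac:(lia)); rewrite e eqxx.
  by move: (chg_inj_lt h ltac:(lia)); rewrite e eqxx.
move=> p /mapP[i]; rewrite mem_iota => /andP[_ hi] ->.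
have lin : i.+1 < n by lia.
apply/allpairsP.
case: (chg_spec lin) => [[-> _]|[-> _]|[-> _]|[-> _]].
- by exists (0, r i); split => //; rewrite mem_undup; apply: HrZ; lia.
- by exists (1, r i.+1); split => //; rewrite mem_undup; apply: HrZ; lia.
- by exists (2, b i); split => //; rewrite mem_undup; apply: HbZ; lia.
- by exists (3, b i.+1); split => //; rewrite mem_undup; apply: HbZ; lia.
Qed.
End Comb.

End CombM.
Import CombM.
Set Implicit Arguments. Unset Strict Implicit. Unset Printing Implicit Defensive.

Section Geo.
Variable R : realType.

Definition envs (S : seq (seg R)) (sg : R) (p : point R) : Prop :=
  forall s q, s \in S -> on_seg s q -> q.1 = p.1 -> sg * p.2 <= sg * q.2.

Definition interp (q1 q2 : point R) (t : R) : point R :=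
  (q1.1 + t * (q2.1 - q1.1), q1.2 + t * (q2.2 - q1.2)).

Lemma on_seg_conv s q1 q2 t : on_seg s q1 -> on_seg s q2 -> 0 <= t -> t <= 1 ->
  on_seg s (interp q1 q2 t).
Proof.
move=> [t1 [h1 [h1' ->]]] [t2 [h2 [h2' ->]]] ht ht'.
exists (t1 + t * (t2 - t1)); split; [|split].
- nra.
- nra.
- rewrite /interp /=; congr (_, _); ring.
Qed.

Lemma abab (S : seq (seg R)) sg a b p1 p2 p3 p4 :
  pairwise_disjoint S -> sg * sg = 1 -> a \in S -> b \in S ->
  on_seg a p1 -> on_seg b p2 -> on_seg a p3 -> on_seg b p4 ->
  p1.1 < p2.1 -> p2.1 < p3.1 -> p3.1 < p4.1 ->
  envs S sg p2 -> envs S sg p3 -> a = b.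
Proof.
move=> Hd Hsg aS bS o1 o2 o3 o4 l12 l23 l34 e2 e3.
case: (eqVneq a b) => // nab; exfalso.
set t := (p2.1 - p1.1) / (p3.1 - p1.1).
have ht : 0 <= t <= 1.
  rewrite /t; apply/andP; split.
    apply: divr_ge0; lra.
  rewrite ler_pdivrMr; lra.
case/andP: ht => ht0 ht1.
set a2 := interp p1 p3 t.
have oa2 : on_seg a a2 by apply: on_seg_conv.
have a2x : a2.1 = p2.1.
  rewrite /a2 /interp /= /t divfK; [ring|]; apply: lt0r_neq0; lra.
set t' := (p3.1 - p2.1) / (p4.1 - p2.1).
have ht' : 0 <= t' <= 1.
  rewrite /t'; apply/andP; split.
    apply: divr_ge0; lra.
  rewrite ler_pdivrMr; lra.
case/andP: ht' => ht0' ht1'.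
set b3 := interp p2 p4 t'.
have ob3 : on_seg b b3 by apply: on_seg_conv.
have b3x : b3.1 = p3.1.
  rewrite /b3 /interp /= /t' divfK; [ring|]; apply: lt0r_neq0; lra.
have sgneq : forall u v : R, sg * u = sg * v -> u = v.
  move=> u v h; have : sg * (sg * u) = sg * (sg * v) by rewrite h.
  by rewrite !mulrA Hsg !mul1r.
have d1 : sg * p2.2 < sg * a2.2.
  rewrite lt_def (e2 a a2 aS oa2 a2x) andbT; apply/eqP => h.
  have hh : a2 = p2 by move: (sgneq _ _ h) a2x; case: (a2) (p2) => ? ? [? ?] /= -> ->.
  by apply: (Hd a b p2 aS bS nab) => //; rewrite -hh.
have d2 : sg * p3.2 < sg * b3.2.
  rewrite lt_def (e3 b b3 bS ob3 b3x) andbT; apply/eqP => h.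
  have hh : b3 = p3 by move: (sgneq _ _ h) b3x; case: (b3) (p3) => ? ? [? ?] /= -> ->.
  by apply: (Hd a b p3 aS bS nab) => //; rewrite -hh.
set D1 := sg * a2.2 - sg * p2.2.
set D2 := sg * b3.2 - sg * p3.2.
have D1p : 0 < D1 by rewrite /D1 subr_gt0.
have D2p : 0 < D2 by rewrite /D2 subr_gt0.
set u := D1 / (D1 + D2).
have hu : 0 <= u <= 1.
  rewrite /u; apply/andP; split.
    apply: divr_ge0; lra.
  rewrite ler_pdivrMr; lra.
case/andP: hu => hu0 hu1.
have hu' : u * (D1 + D2) = D1 by rewrite /u divfK //; apply: lt0r_neq0; lra.
have oc1 : on_seg a (interp a2 p3 u) by apply: on_seg_conv.
have oc2 : on_seg b (interp p2 b3 u) by apply: on_seg_conv.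
have ceq : interp a2 p3 u = interp p2 b3 u.
  rewrite /interp; congr (_, _).
    by rewrite a2x b3x.
  apply: sgneq.
  move: hu'; rewrite /D1 /D2 => hu'.
  apply/eqP; rewrite -subr_eq0; apply/eqP.
  transitivity (D1 - u * (D1 + D2)); last by rewrite hu' subrr.
  rewrite /D1 /D2; ring.
by apply: (Hd a b _ aS bS nab oc1); rewrite ceq.
Qed.

End Geo.

Section Main.
Variable R : realType.

Lemma case_bound (S1 S2 : seq (seg R)) sg1 sg2 (Q : seq (point R)) :
  sg1 * sg1 = 1 -> sg2 * sg2 = 1 -> pairwise_disjoint S1 -> pairwise_disjoint S2 ->
  no_overlap S1 S2 -> uniq Q ->
  (forall p, p \in Q -> [/\ red_blue_point S1 S2 p, envs S1 sg1 p & envs S2 sg2 p]) ->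
  (size Q <= (4 * size (undup (S1 ++ S2))).+1)%N.
Proof.
move=> Hs1 Hs2 HD1 HD2 Hno uQ HQ.
pose x00 : seg R := ((0, 0), (0, 0)).
pose red p := epsilon (inhabits x00) (fun s => s \in S1 /\ on_seg s p).
pose blue p := epsilon (inhabits x00) (fun s => s \in S2 /\ on_seg s p).
have redP : forall p, p \in Q -> red p \in S1 /\ on_seg (red p) p.
  move=> p /HQ [[s1 [s2 [h1 h2 h3 h4]]] _ _].
  by apply: (epsilon_spec (inhabits x00) (fun s => s \in S1 /\ on_seg s p)); exists s1.
have blueP : forall p, p \in Q -> blue p \in S2 /\ on_seg (blue p) p.
  move=> p /HQ [[s1 [s2 [h1 h2 h3 h4]]] _ _].
  by apply: (epsilon_spec (inhabits x00) (fun s => s \in S2 /\ on_seg s p)); exists s2.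
have sgneq : forall u v : R, sg1 * u = sg1 * v -> u = v.
  move=> u v h; have : sg1 * (sg1 * u) = sg1 * (sg1 * v) by rewrite h.
  by rewrite !mulrA Hs1 !mul1r.
have xinj : forall p q, p \in Q -> q \in Q -> p.1 = q.1 -> p = q.
  move=> p q pQ qQ e.
  have [_ e1 _] := HQ p pQ; have [_ e2 _] := HQ q qQ.
  have [rq oq] := redP q qQ; have [rp op] := redP p pQ.
  have l1 := e1 _ _ rq oq (esym e).
  have l2 := e2 _ _ rp op e.
  have : p.2 = q.2 by apply: sgneq; apply/eqP; rewrite eq_le l1 l2.
  by move: e; case: (p) (q) => ? ? [? ?] /= -> ->.
pose L := sort (fun p q : point R => p.1 <= q.1) Q.
have memL : L =i Q by apply: mem_sort.
have sizeL : size L = size Q by rewrite size_sort.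
have uL : uniq L by rewrite sort_uniq.
have sortL : sorted (fun p q : point R => p.1 <= q.1) L.
  by apply: sort_sorted => p q; apply: le_total.
pose x0 : point R := (0, 0).
have inL : forall i, (i < size L)%N -> nth x0 L i \in Q.
  by move=> i hi; rewrite -memL mem_nth.
have ltL : forall i j, (i < j)%N -> (j < size L)%N -> (nth x0 L i).1 < (nth x0 L j).1.
  move=> i j hij hj.
  have hle : (nth x0 L i).1 <= (nth x0 L j).1.
    apply: (sorted_ltn_nth (leT := fun p q : point R => p.1 <= q.1)) => //.
    - by move=> y x z; apply: le_trans.
    - rewrite inE; lia.
  rewrite lt_neqAle hle andbT; apply/eqP => e.
  have := xinj _ _ (inL i ltac:(lia)) (inL j hj) e.
  move/eqP; rewrite nth_uniq //; last exact: ltn_trans hij hj.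
  by move/eqP => eij; rewrite eij ltnn in hij.
have := @comb_bound _ (size L) (fun k => red (nth x0 L k)) (fun k => blue (nth x0 L k)) (S1 ++ S2).
move=> H; suff : ((size L).-1 <= 4 * size (undup (S1 ++ S2)))%N by rewrite sizeL; lia.
apply: H.
- move=> i hi.
  case: eqVneq => //= e1; case: eqVneq => //= e2; exfalso.
  have [r1 o1] := redP _ (inL i ltac:(lia)).
  have [b1 o1'] := blueP _ (inL i ltac:(lia)).
  have [_ o2] := redP _ (inL i.+1 hi).
  have [_ o2'] := blueP _ (inL i.+1 hi).
  rewrite -e1 in o2; rewrite -e2 in o2'.
  have := Hno _ _ _ _ r1 b1 o1 o1' o2 o2'.
  move/eqP; rewrite nth_uniq //; last exact: ltnW.
  by rewrite eqn_leq ltnn andbF.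
- move=> k i i' j hki hii' hi'j hj ek ej.
  have [r1 o1] := redP _ (inL k ltac:(lia)).
  have [r2 o2] := redP _ (inL i ltac:(lia)).
  have [_ o3] := redP _ (inL i' ltac:(lia)).
  have [_ o4] := redP _ (inL j hj).
  rewrite -ek in o3; rewrite -ej in o4.
  symmetry; apply: (abab HD1 Hs1 r1 r2 o1 o2 o3 o4).
  + by apply: ltL; lia.
  + by apply: ltL; lia.
  + by apply: ltL; lia.
  + by have [] := HQ _ (inL i ltac:(lia)).
  + by have [] := HQ _ (inL i' ltac:(lia)).
- move=> k i i' j hki hii' hi'j hj ek ej.
  have [r1 o1] := blueP _ (inL k ltac:(lia)).
  have [r2 o2] := blueP _ (inL i ltac:(lia)).
  have [_ o3] := blueP _ (inL i' ltac:(lia)).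
  have [_ o4] := blueP _ (inL j hj).
  rewrite -ek in o3; rewrite -ej in o4.
  symmetry; apply: (abab HD2 Hs2 r1 r2 o1 o2 o3 o4).
  + by apply: ltL; lia.
  + by apply: ltL; lia.
  + by apply: ltL; lia.
  + by have [] := HQ _ (inL i ltac:(lia)).
  + by have [] := HQ _ (inL i' ltac:(lia)).
- by move=> i hi; rewrite mem_cat (proj1 (redP _ (inL i hi))).
- by move=> i hi; rewrite mem_cat (proj1 (blueP _ (inL i hi))) orbT.
Qed.

End Main.

Definition dec (P : Prop) : bool := if excluded_middle_informative P then true else false.
Lemma decP (P : Prop) : dec P <-> P.
Proof. by rewrite /dec; case: excluded_middle_informative. Qed.

Lemma count4 (T : eqType) (a b c d : pred T) (s : seq T) :
  (forall x, x \in s -> [|| a x, b x, c x | d x]) ->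
  (size s <= count a s + count b s + count c s + count d s)%N.
Proof.
elim: s => //= x s IH H.
have := H x (mem_head _ _); have := IH (fun y hy => H y (mem_behead (s := x :: s) hy)).
case: (a x); case: (b x); case: (c x); case: (d x) => //=; lia.
Qed.

Unset Implicit Arguments.
Theorem lemma1 : exists C : nat,
  forall (R : realType) (S1 S2 : seq (seg R)),
    (forall s, s \in S1 ++ S2 -> nonvertical s) ->
    pairwise_disjoint S1 -> pairwise_disjoint S2 ->
    no_overlap S1 S2 ->
    forall P : seq (point R), uniq P ->
      (forall p, p \in P ->
         [/\ red_blue_point S1 S2 p, on_env S1 p & on_env S2 p]) ->
      (size P <= C * size (undup (S1 ++ S2)))%N.
Proof.
exists 20%N => R S1 S2 _ HD1 HD2 Hno P uP HP.
have Npos : (0 < size (undup (S1 ++ S2)))%N \/ P = [::].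
  case: P uP HP => [|x P'] uP HP; first by right.
  left; have [[s1 [s2 [h1 _ _ _]]] _ _] := HP x (mem_head _ _).
  have : s1 \in undup (S1 ++ S2) by rewrite mem_undup mem_cat h1.
  by case: (undup (S1 ++ S2)).
case: Npos => [Npos|->]; last by [].
pose c (sg1 sg2 : R) := fun p => dec (envs S1 sg1 p /\ envs S2 sg2 p).
have envL : forall (S : seq (seg R)) (p : point R), on_lower_env S p -> envs S 1 p.
  by move=> S p [hh h] s q hs hq e; rewrite !mul1r; apply: h hs hq e.
have envU : forall (S : seq (seg R)) (p : point R), on_upper_env S p -> envs S (-1) p.
  by move=> S p [hh h] s q hs hq e; rewrite !mulN1r lerN2; apply: h hs hq e.
have m1 : (-1 : R) * -1 = 1 by rewrite mulN1r opprK.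
have m2 : (1 : R) * 1 = 1 by rewrite mulr1.
have bnd : forall sg1 sg2, sg1 * sg1 = 1 -> sg2 * sg2 = 1 ->
    (count (c sg1 sg2) P <= (4 * size (undup (S1 ++ S2))).+1)%N.
  move=> sg1 sg2 h1 h2; rewrite -size_filter.
  apply: (@case_bound R S1 S2 sg1 sg2) => //; first exact: filter_uniq uP.
  move=> p; rewrite mem_filter => /andP[/decP [e1 e2] pP].
  by have [] := HP p pP.
have H := @count4 _ (c 1 1) (c 1 (-1)) (c (-1) 1) (c (-1) (-1)) P.
have cov : forall x, x \in P -> [|| c 1 1 x, c 1 (-1) x, c (-1) 1 x | c (-1) (-1) x].
  move=> x xP; have [_ [h1|h1] [h2|h2]] := HP x xP.
  - have -> : c 1 1 x by apply/decP; split; [apply: envL|apply: envL].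
    by rewrite ?orbT.
  - have -> : c 1 (-1) x by apply/decP; split; [apply: envL|apply: envU].
    by rewrite ?orbT.
  - have -> : c (-1) 1 x by apply/decP; split; [apply: envU|apply: envL].
    by rewrite ?orbT.
  - have -> : c (-1) (-1) x by apply/decP; split; [apply: envU|apply: envU].
    by rewrite ?orbT.
have := H cov.
have := bnd _ _ m2 m2; have := bnd _ _ m2 m1; have := bnd _ _ m1 m2; have := bnd _ _ m1 m1.
move: Npos (count (c 1 1) P) (count (c 1 (-1)) P) (count (c (-1) 1) P) (count (c (-1) (-1)) P).
move: (size P) (size (undup (S1 ++ S2))) => a b Np a1 a2 a3 a4.
lia.
Qed.
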